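(* Let $1\le n\le L$ and $I\subseteq\{1,\dots,n\}$. The set $\Omega^I_{L,n}$ is stable under the dynamics on $\Omega_{L,n}$ from which the transitions (T3) and (T4) with $k\in I$ are excluded: if $w\in\Omega^I_{L,n}$ and $w\to w'$ is a transition of type (T1) or (T2) (any $k$), or of type (T3) or (T4) with $k\notin I$, then $w'\in\Omega^I_{L,n}$.
   Context: Particle labels are taken modulo $n$, positions modulo $L$. $\Omega_{L,n}$ is the set of words $w_1\cdots w_L$ on the ring $\mathbb{Z}/L\mathbb{Z}$ over the alphabet $\{\bullet_1,\dots,\bullet_n,\Box_1,\dots,\Box_n\}$ in which each $\bullet_k$ occurs exactly once, the $\bullet_1,\dots,\bullet_n$ appear in this cyclic order, and the remaining $L-n$ letters are arbitrary $\Box_i$'s. Transitions (displayed segments are consecutive positions, rest unchanged, $C$ a possibly empty word in the $\Box$-letters): (T1) $\bullet_k\Box_i \to \Box_i\bullet_k$ at rate $p_k$, if $i\neq k$; (T2) $\bullet_{k-1}\,C\,\bullet_k\Box_k \to \bullet_{k-1}\Box_{k-1}\,C\,\bullet_k$ at rate $p_k$; (T3) $\Box_i\bullet_k \to \bullet_k\Box_i$ at rate $q_k$, if $i\neq k$; (T4) $\Box_k\bullet_k\,C\,\bullet_{k+1} \to \bullet_k\,C\,\Box_{k+1}\bullet_{k+1}$ at rate $q_k$. Weights: let $b_k$ be the position of $\bullet_k$ and $C_k$ the set of positions strictly between $b_k$ and $b_{k+1}$ going cyclically forward ($b_{n+1}=b_1$). For $i,k\in\{1,\dots,n\}$ set $w_\Box(i,k)=p_1\cdots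 p_{i-1}q_{i+1}\cdots q_kp_{k+1}\cdots p_n$ if $i\le k$ and $w_\Box(i,k)=q_1\cdots q_kp_{k+1}\cdots p_{i-1}q_{i+1}\cdots q_n$ if $k<i$ (empty products are $1$), as monomials in indeterminates. The weight is the monomial $\mathrm{wt}(w)=\prod_{k=1}^n\prod_{j\in C_k}w_\Box(i_j,k)$ where $w_j=\Box_{i_j}$. $\Omega^I_{L,n}$ is the set of $w\in\Omega_{L,n}$ whose weight monomial contains no $q_k$ with $k\in I$ (i.e. $\mathrm{wt}(w)\ne0$ when $q_k=0$ for $k\in I$ and all other rates are positive). *)

(* Defs.v *)
From mathcomp Require Import all_boot.
Set Implicit Arguments. Unset Strict Implicit. Unset Printing Implicit Defensive.

(* Letters: Bul k = \bullet_k, Box i = \Box_i. Labels are natural numbers, the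
   paper's labels 1..n are used verbatim. *)
Inductive letter := Bul of nat | Box of nat.

Definition letter_label (x : letter) : nat := match x with Bul k => k | Box k => k end.
Definition is_bul (k : nat) (x : letter) : bool :=
  match x with Bul k' => k' == k | Box _ => false end.
Definition is_box (x : letter) : bool := match x with Box _ => true | _ => false end.
Definition box_label (x : letter) : nat := match x with Box i => i | Bul _ => 0 end.

Definition prevl (n k : nat) : nat := if k == 1 then n else k.-1.
Definition nextl (n k : nat) : nat := if k == n then 1 else k.+1.

(* A cyclic word on Z/LZ is a sequence of length L; positions are read mod L. *)
Definition at_ (w : seq letter) (x : nat) : letter := nth (Box 0) w (x %% size w).

Definition bpos (w : seq letter) (k : nat) : nat := find (is_bul k) w.

Definition Omega (L n : nat) (w : seq letter) : Prop :=
  [/\ size w = L,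
      all (fun x => 1 <= letter_label x <= n) w,
      (forall k, 1 <= k <= n -> count (is_bul k) w = 1) &
      (* the bullets appear in the cyclic order 1,2,...,n *)
      (forall k1 k2, 1 <= k1 -> k1 < k2 -> k2 <= n ->
         (bpos w k1 + L - bpos w 1) %% L < (bpos w k2 + L - bpos w 1) %% L)].

(* Forward cyclic distance from position a to position b on Z/LZ, in 1..L
   (equal to L when a = b, i.e. the full turn). *)
Definition cdist (L a b : nat) : nat :=
  let r := (b + L - a) %% L in if r == 0 then L else r.

(* Monomials in the indeterminates p_1..p_n, q_1..q_n, represented by their
   exponent vectors (exponent of p_m, exponent of q_m). *)
Definition monomial := ((nat -> nat) * (nat -> nat))%type.
Definition mone : monomial := (fun _ => 0, fun _ => 0).
Definition mmul (a b : monomial) : monomial :=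
  (fun m => a.1 m + b.1 m, fun m => a.2 m + b.2 m).

Definition wbox (n i k : nat) : monomial :=
  (fun m => nat_of_bool ((1 <= m <= n) &&
              (if i <= k then (m < i) || (k < m) else (k < m) && (m < i))),
   fun m => nat_of_bool ((1 <= m <= n) &&
              (if i <= k then (i < m) && (m <= k) else (m <= k) || (i < m)))).

(* wt(w) = prod_k prod_{j in C_k} w_Box(i_j, k); C_k = positions strictly
   between b_k and b_{k+1} going cyclically forward. *)
Definition wt (L n : nat) (w : seq letter) : monomial :=
  \big[mmul/mone]_(1 <= k < n.+1)
    \big[mmul/mone]_(1 <= t < cdist L (bpos w k) (bpos w (nextl n k)))
       wbox n (box_label (at_ w (bpos w k + t))) k.

Definition OmegaI (L n : nat) (I : pred nat) (w : seq letter) : Prop :=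
  Omega L n w /\ (forall k, I k -> (wt L n w).2 k = 0).

(* u occurs as a factor of the cyclic word w at consecutive positions
   s, s+1, ..., s+|u|-1 (mod L), which are pairwise distinct. *)
Definition factor (w : seq letter) (s : nat) (u : seq letter) : Prop :=
  size u <= size w /\ forall t, t < size u -> at_ w (s + t) = nth (Box 0) u t.

Definition replace (w : seq letter) (s : nat) (v : seq letter) : seq letter :=
  mkseq (fun j => let o := (j + size w - s %% size w) %% size w in
                  if o < size v then nth (Box 0) v o else nth (Box 0) w j)
        (size w).

Definition T1 (n k : nat) (w w' : seq letter) : Prop :=
  exists s i, i != k /\ factor w s [:: Bul k; Box i] /\
              w' = replace w s [:: Box i; Bul k].
Definition T2 (n k : nat) (w w' : seq letter) : Prop :=
  exists s (C : seq letter), all is_box C /\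
    factor w s (Bul (prevl n k) :: C ++ [:: Bul k; Box k]) /\
    w' = replace w s (Bul (prevl n k) :: Box (prevl n k) :: C ++ [:: Bul k]).
Definition T3 (n k : nat) (w w' : seq letter) : Prop :=
  exists s i, i != k /\ factor w s [:: Box i; Bul k] /\
              w' = replace w s [:: Bul k; Box i].
Definition T4 (n k : nat) (w w' : seq letter) : Prop :=
  exists s (C : seq letter), all is_box C /\
    factor w s (Box k :: Bul k :: C ++ [:: Bul (nextl n k)]) /\
    w' = replace w s (Bul k :: C ++ [:: Box (nextl n k); Bul (nextl n k)]).

Definition stepI (n : nat) (I : pred nat) (w w' : seq letter) : Prop :=
  exists k, 1 <= k <= n /\
    (T1 n k w w' \/ T2 n k w w' \/ (~~ I k /\ (T3 n k w w' \/ T4 n k w w'))).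

(* Main.v *)
Require Import Defs.
From mathcomp Require Import all_boot zify.
Set Implicit Arguments. Unset Strict Implicit. Unset Printing Implicit Defensive.

Lemma modE x L : 0 < L -> x < 2 * L -> x = x %% L \/ x = x %% L + L.
Proof.
move=> L0 hx; case: (ltnP x L) => h; first by left; rewrite modn_small.
right; rewrite -{1}(subnK h) -{2}(subnK h) modnDr modn_small //; lia.
Qed.

Lemma count_rot T (a : pred T) k (s : seq T) : count a (rot k s) = count a s.
Proof. by rewrite /rot count_cat addnC -count_cat cat_take_drop. Qed.
Lemma all_rot' T (a : pred T) k (s : seq T) : all a (rot k s) = all a s.
Proof. by rewrite /rot all_cat andbC -all_cat cat_take_drop. Qed.

Lemma at_mod w x : at_ w (x %% size w) = at_ w x.
Proof. by rewrite /at_ modn_mod. Qed.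
Lemma at_cong w x y : x %% size w = y %% size w -> at_ w x = at_ w y.
Proof. by rewrite /at_ => ->. Qed.
Lemma at_per w x : at_ w (x + size w) = at_ w x.
Proof. by apply: at_cong; rewrite modnDr. Qed.

Lemma is_bulE k x : is_bul k x -> x = Bul k.
Proof. by case: x => // k' /eqP ->. Qed.
Lemma bul_of (x : letter) : ~~ is_box x -> exists b, x = Bul b.
Proof. by case: x => // b _; exists b. Qed.
Lemma box_of (x : letter) : is_box x -> x = Box (box_label x).
Proof. by case: x. Qed.

Lemma cnt_pos T (P : pred T) x0 s p : p < size s -> P (nth x0 s p) -> 0 < count P s.
Proof. by move=> hp hP; rewrite -has_count; apply/(has_nthP x0); exists p. Qed.

Lemma cnt2 T (P : pred T) x0 s p q : p < q < size s -> P (nth x0 s p) -> P (nth x0 s q) ->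
  1 < count P s.
Proof.
elim: s p q => [|a s IH] p q //=; first lia.
case: p => [|p] /= hpq hp hq.
- rewrite hp; case: q hpq hq => [|q] //= hq hQ.
  have := cnt_pos (s := s) (p := q) ltac:(lia) hQ; lia.
- case: q hpq hq => [|q] //= hpq hq.
  have := IH p q ltac:(lia) hp hq; lia.
Qed.

Lemma bposP w k : count (is_bul k) w = 1 ->
  bpos w k < size w /\ nth (Box 0) w (bpos w k) = Bul k.
Proof.
move=> hc; have hh : has (is_bul k) w by rewrite has_count hc.
split; first by rewrite /bpos -has_find.
by apply: is_bulE; apply: nth_find.
Qed.

Lemma bpos_uniq w k p : count (is_bul k) w = 1 -> p < size w ->
  nth (Box 0) w p = Bul k -> p = bpos w k.
Proof.
move=> hc hp hn; have [hb hnb] := bposP hc.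
case: (ltngtP p (bpos w k)) => // E.
- by have := before_find (Box 0) E; rewrite hn /= eqxx.
- have := cnt2 (P := is_bul k) (x0 := Box 0) (s := w) (p := bpos w k) (q := p).
  rewrite hnb hn /= eqxx hc => /(_ ltac:(lia) isT isT); lia.
Qed.

Definition Pre L n w := [/\ size w = L, all (fun x => 1 <= letter_label x <= n) w &
      (forall k, 1 <= k <= n -> count (is_bul k) w = 1)].

Lemma OmegaPre L n w : Omega L n w -> Pre L n w.
Proof. by case. Qed.

Lemma at_lab L n w x : Pre L n w -> 0 < L -> 1 <= letter_label (at_ w x) <= n.
Proof.
case=> hs ha hc L0; move/(all_nthP (Box 0)): ha; apply; rewrite ltn_pmod //; lia.
Qed.

Lemma at_bul L n w x k : Pre L n w -> 0 < L -> at_ w x = Bul k ->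
  1 <= k <= n /\ x %% L = bpos w k.
Proof.
move=> hP L0 hx; have := at_lab x hP L0; rewrite hx /= => hk; split => //.
case: hP => hs _ hc; apply: bpos_uniq; first by apply: hc.
- by rewrite -hs ltn_pmod // hs.
- by rewrite -hx /at_ hs.
Qed.

Lemma at_bpos L n w k : Pre L n w -> 1 <= k <= n -> at_ w (bpos w k) = Bul k.
Proof.
case=> hs _ hc hk; have [hb hn] := bposP (hc k hk).
by rewrite /at_ modn_small.
Qed.

Lemma bpos_lt L n w k : Pre L n w -> 1 <= k <= n -> bpos w k < L.
Proof. case=> hs _ hc hk; have [hb hn] := bposP (hc k hk); by rewrite -hs. Qed.

Lemma cdist_spec L a b : 0 < L -> a < L -> b < L ->
  0 < cdist L a b <= L /\ (a + cdist L a b) %% L = b.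
Proof.
move=> L0 ha hb; rewrite /cdist.
have := modE (x := b + L - a) L0 ltac:(lia).
have := ltn_pmod (b + L - a) L0.
case: eqP => E.
- rewrite E => _ h; split; first lia.
  rewrite (_ : a + L = b + L); [by rewrite modnDr modn_small|lia].
- move: ((b + L - a) %% L) E => r E h1 h2; split; first lia.
  have := modE (x := a + r) L0 ltac:(lia).
  have := ltn_pmod (a + r) L0.
  move: ((a + r) %% L) => z; lia.
Qed.

Lemma cdist_uniq L a b c : 0 < L -> a < L -> b < L -> 0 < c <= L -> (a + c) %% L = b ->
  c = cdist L a b.
Proof.
move=> L0 ha hb hc E; rewrite /cdist.
have := modE (x := b + L - a) L0 ltac:(lia).
have := ltn_pmod (b + L - a) L0.
have := modE (x := a + c) L0 ltac:(lia).
rewrite E.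
case: eqP => E2.
- rewrite E2; lia.
- move: ((b + L - a) %% L) E2 => r E2; lia.
Qed.

Lemma nextl_range n k : 1 <= k <= n -> 1 <= nextl n k <= n.
Proof. rewrite /nextl; case: eqP; lia. Qed.
Lemma nextl_lt n k : k < n -> nextl n k = k.+1.
Proof. rewrite /nextl; case: eqP; lia. Qed.
Lemma nextl_n n : nextl n n = 1.
Proof. by rewrite /nextl eqxx. Qed.
Lemma next_prev n k : 1 <= k <= n -> nextl n (prevl n k) = k.
Proof. rewrite /nextl /prevl; case: (k =P 1) => [->|h]; first by rewrite eqxx.
case: eqP; lia. Qed.
Lemma prevl_range n k : 1 <= k <= n -> 1 <= prevl n k <= n.
Proof. rewrite /prevl; case: eqP; lia. Qed.
Lemma arith_gap2 bk bj b1 t c L : 0 < L -> bk < L -> bj < L -> b1 < L ->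
  0 < t < c -> c <= L -> (bk + c) %% L = b1 -> (bk + t) %% L = bj ->
  (bk + L - b1) %% L < (bj + L - b1) %% L.
Proof.
move=> L0 h1 h3 h4 ht hc e1 e2.
have := modE (x := bk + c) L0 ltac:(lia).
have := modE (x := bk + t) L0 ltac:(lia).
have := modE (x := bk + L - b1) L0 ltac:(lia).
have := modE (x := bj + L - b1) L0 ltac:(lia).
have := ltn_pmod (bk + L - b1) L0.
have := ltn_pmod (bj + L - b1) L0.
rewrite e1 e2.
move: ((bk + L - b1) %% L) ((bj + L - b1) %% L) => x z.
lia.
Qed.
Lemma arith_step bj bj1 b1 c L : 0 < L -> bj < L -> bj1 < L -> b1 < L ->
  0 < c <= L -> (bj + c) %% L = bj1 ->
  ~~ ((bj + L - b1) %% L < (bj1 + L - b1) %% L) ->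
  0 < L - (bj + L - b1) %% L <= c /\ (bj + (L - (bj + L - b1) %% L)) %% L = b1.
Proof.
move=> L0 h1 h2 h3 hc e1 o.
have := modE (x := bj + c) L0 ltac:(lia).
have := modE (x := bj + L - b1) L0 ltac:(lia).
have := modE (x := bj1 + L - b1) L0 ltac:(lia).
have := ltn_pmod (bj + L - b1) L0.
have := ltn_pmod (bj1 + L - b1) L0.
rewrite e1.
move: ((bj + L - b1) %% L) ((bj1 + L - b1) %% L) o => x y o h4 h5 h6 h7 h8.
split; first lia.
have := modE (x := bj + (L - x)) L0 ltac:(lia).
have := ltn_pmod (bj + (L - x)) L0.
move: ((bj + (L - x)) %% L) => z; lia.
Qed.
Lemma arith_gap bk bk1 bj b1 t c L : 0 < L -> bk < L -> bk1 < L -> bj < L -> b1 < L ->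
  0 < t < c -> c <= L -> (bk + c) %% L = bk1 -> (bk + t) %% L = bj ->
  (bk + L - b1) %% L < (bk1 + L - b1) %% L ->
  (bk + L - b1) %% L < (bj + L - b1) %% L < (bk1 + L - b1) %% L.
Proof.
move=> L0 h1 h2 h3 h4 ht hc e1 e2 o.
have := modE (x := bk + c) L0 ltac:(lia).
have := modE (x := bk + t) L0 ltac:(lia).
have := modE (x := bk + L - b1) L0 ltac:(lia).
have := modE (x := bk1 + L - b1) L0 ltac:(lia).
have := modE (x := bj + L - b1) L0 ltac:(lia).
have := ltn_pmod (bk + L - b1) L0.
have := ltn_pmod (bk1 + L - b1) L0.
have := ltn_pmod (bj + L - b1) L0.
rewrite e1 e2.
move: ((bk + L - b1) %% L) ((bk1 + L - b1) %% L) ((bj + L - b1) %% L) o => x y z o.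
lia.
Qed.

Definition ordc L n w := forall k1 k2, 1 <= k1 -> k1 < k2 -> k2 <= n ->
  (bpos w k1 + L - bpos w 1) %% L < (bpos w k2 + L - bpos w 1) %% L.

Lemma gap L n w k t : Pre L n w -> ordc L n w -> 0 < L -> 1 <= k <= n ->
  0 < t < cdist L (bpos w k) (bpos w (nextl n k)) -> is_box (at_ w (bpos w k + t)).
Proof.
move=> hP Hord L0 hk ht.
apply/negPn/negP => hb; have [j hj] := bul_of hb.
have [hjr hjp] := at_bul hP L0 hj.
have hnk := nextl_range hk.
have h1 : 1 <= 1 <= n by lia.
have [hc hcm] := cdist_spec L0 (bpos_lt hP hk) (bpos_lt hP hnk).
have bl := bpos_lt hP.
case: (ltnP k n) => hkn.
- rewrite nextl_lt // in hc hcm ht.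
  have o := Hord k k.+1 ltac:(lia) ltac:(lia) hkn.
  have := arith_gap L0 (bl k hk) (bl k.+1 ltac:(lia)) (bl j hjr) (bl 1 h1) ht ltac:(lia) hcm hjp o.
  case: (ltngtP j k) => E.
  + have := Hord j k ltac:(lia) E ltac:(lia); lia.
  + case: (ltngtP j k.+1) => E2; first lia.
    * have := Hord k.+1 j ltac:(lia) E2 ltac:(lia); lia.
    * subst j; lia.
  + subst j; lia.
- have Ekn : k = n by lia.
  subst k; rewrite nextl_n in hc hcm ht.
  have := arith_gap2 L0 (bl n hk) (bl j hjr) (bl 1 h1) ht ltac:(lia) hcm hjp.
  case: (ltngtP j n) => E; last by subst j; lia.
  + have := Hord j n ltac:(lia) E ltac:(lia); lia.
  + lia.
Qed.

Lemma wt2 L n w m : (wt L n w).2 m =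
  \sum_(1 <= k < n.+1) \sum_(1 <= t < cdist L (bpos w k) (bpos w (nextl n k)))
     (wbox n (box_label (at_ w (bpos w k + t))) k).2 m.
Proof.
rewrite /wt (big_morph (fun x : monomial => x.2 m) (id1 := 0) (op1 := addn)) //.
apply: eq_bigr => k _.
by rewrite (big_morph (fun x : monomial => x.2 m) (id1 := 0) (op1 := addn)).
Qed.

Definition OKb n (I : pred nat) i a := forall m, I m -> (wbox n i a).2 m = 0.
Definition Q n I a (x : letter) : Prop :=
  match x with Bul b => b = nextl n a | Box i => OKb n I i a end.
Definition RP n I L (g : nat -> letter) := forall Y a t, Y < L -> 0 < t <= L ->
  g Y = Bul a -> (forall t', 0 < t' < t -> is_box (g (Y + t'))) -> Q n I a (g (Y + t)).
Definition RPc n I w := forall y a t, 0 < t <= size w -> at_ w y = Bul a ->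
  (forall t', 0 < t' < t -> is_box (at_ w (y + t'))) -> Q n I a (at_ w (y + t)).

Lemma omega_rp L n (I : pred nat) w : 0 < L -> OmegaI L n I w -> RPc n I w.
Proof.
move=> L0 [hO hwt] y a t ht hy hint.
have hP := OmegaPre hO; have Hord : ordc L n w by case: hO.
have [ha hya] := at_bul hP L0 hy.
have hs : size w = L by case: hP.
have hna := nextl_range ha.
have [hc hcm] := cdist_spec L0 (bpos_lt hP ha) (bpos_lt hP hna).
have shift : forall t', at_ w (y + t') = at_ w (bpos w a + t').
  by move=> t'; apply: at_cong; rewrite hs -modnDml hya.
have endp : at_ w (bpos w a + cdist L (bpos w a) (bpos w (nextl n a))) = Bul (nextl n a).
  rewrite -(at_bpos hP hna); apply: at_cong; rewrite hs hcm modn_small //.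
  exact: bpos_lt hP hna.
case: (ltngtP t (cdist L (bpos w a) (bpos w (nextl n a)))) => E.
- rewrite shift. have := gap hP Hord L0 ha (t := t) ltac:(lia).
  move/box_of => -> /= m Im.
  have := hwt m Im; rewrite wt2 => /eqP; rewrite sum_nat_seq_eq0 => /allP /(_ a).
  rewrite mem_index_iota => /(_ ltac:(lia)) /=.
  rewrite sum_nat_seq_eq0 => /allP /(_ t); rewrite mem_index_iota => /(_ ltac:(lia)) /=.
  by move/eqP.
- exfalso; have := hint (cdist L (bpos w a) (bpos w (nextl n a))) ltac:(lia).
  by rewrite shift endp.
- by rewrite shift E endp.
Qed.

Lemma fb L n (I : pred nat) w k : 0 < L -> Pre L n w -> RPc n I w -> 1 <= k <= n ->
  forall t', 0 < t' < cdist L (bpos w k) (bpos w (nextl n k)) -> is_box (at_ w (bpos w k + t')).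
Proof.
move=> L0 hP hR hk.
have hs : size w = L by case: hP.
have hnk := nextl_range hk.
pose P := fun t => (0 < t) && ~~ is_box (at_ w (bpos w k + t)).
have exP : exists t, P t.
  by exists L; rewrite /P -{2}hs at_per (at_bpos hP hk) /= andbT.
case: (ex_minnP exP) => c /andP[c0 cb] cmin.
have cL : c <= L by apply: cmin; rewrite /P -{2}hs at_per (at_bpos hP hk) /= andbT.
have hint : forall t', 0 < t' < c -> is_box (at_ w (bpos w k + t')).
  move=> t' ht'; apply/negPn/negP => hb.
  have := cmin t'; rewrite /P hb andbT => /(_ ltac:(lia)); lia.
have [b hb] := bul_of cb.
have := hR (bpos w k) k c ltac:(lia) (at_bpos hP hk) hint; rewrite hb /= => Eb.
have [_ hbp] := at_bul hP L0 hb.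
have Ec : c = cdist L (bpos w k) (bpos w (nextl n k)).
  apply: cdist_uniq => //; [exact: bpos_lt hP hk|exact: bpos_lt hP hnk|lia|by rewrite -Eb].
by rewrite -Ec.
Qed.

Lemma rp_omega L n (I : pred nat) w : 1 <= n <= L -> Pre L n w -> RPc n I w -> OmegaI L n I w.
Proof.
move=> hn hP hR.
have L0 : 0 < L by lia.
have hs : size w = L by case: hP.
have bl := bpos_lt hP.
have h1 : 1 <= 1 <= n by lia.
have step : forall j, 1 <= j < n ->
    (bpos w j + L - bpos w 1) %% L < (bpos w j.+1 + L - bpos w 1) %% L.
  move=> j hj; apply/negPn/negP => o.
  have hj' : 1 <= j <= n by lia.
  have hj1 : 1 <= j.+1 <= n by lia.
  have [hc hcm] := cdist_spec L0 (bl j hj') (bl j.+1 hj1).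
  have [ht0 ht0m] := arith_step L0 (bl j hj') (bl j.+1 hj1) (bl 1 h1) hc hcm o.
  have hfb := fb L0 hP hR hj'; rewrite nextl_lt in hfb; last lia.
  case: (ltngtP (L - (bpos w j + L - bpos w 1) %% L) (cdist L (bpos w j) (bpos w j.+1))) => E.
  + have := hfb (L - (bpos w j + L - bpos w 1) %% L) ltac:(lia).
    rewrite (@at_cong w _ (bpos w 1)); last by rewrite hs ht0m modn_small // bl.
    by rewrite (at_bpos hP h1).
  + lia.
  + rewrite E hcm in ht0m.
    have := at_bpos hP hj1; rewrite ht0m (at_bpos hP h1); case; lia.
have hord : ordc L n w.
  move=> k1 k2 hk1; elim: k2 => // k2 IH hk12 hk2.
  case: (ltngtP k1 k2) => E; [|lia|].
  - have := IH E ltac:(lia); have := step k2 ltac:(lia); lia.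
  - subst k2; apply: step; lia.
case: hP => hs' ha hc; split; first by split.
move=> m Im; rewrite wt2; apply/eqP; rewrite sum_nat_seq_eq0; apply/allP => k.
rewrite mem_index_iota => hk /=.
rewrite sum_nat_seq_eq0; apply/allP => t; rewrite mem_index_iota => ht /=.
have hk' : 1 <= k <= n by lia.
have hP : Pre L n w by split.
have hfb := fb L0 hP hR hk'.
have hnk := nextl_range hk'.
have [hc0 _] := cdist_spec L0 (bl k hk') (bl _ hnk).
have := hR (bpos w k) k t ltac:(lia) (at_bpos hP hk') (fun t' h => hfb t' ltac:(lia)).
rewrite (box_of (hfb t ltac:(lia))) /= => /(_ m Im) h.
by apply/eqP; exact: h.

Qed.

Lemma nth_rot' w s' j : s' < size w -> j < size w ->
  nth (Box 0) (rot s' w) j = at_ w (s' + j).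
Proof.
move=> hs hj; rewrite /rot /at_ nth_cat size_drop.
have L0 : 0 < size w by lia.
case: ltnP => h.
- by rewrite nth_drop modn_small //; lia.
- rewrite nth_take; last lia.
  have := modE (x := s' + j) L0 ltac:(lia).
  have := ltn_pmod (s' + j) L0.
  move: ((s' + j) %% size w) => z h1 h2; congr nth; lia.
Qed.

Lemma size_replace w s v : size (replace w s v) = size w.
Proof. by rewrite /replace size_mkseq. Qed.

Lemma at_replace w s v j : size v <= size w -> j < size w ->
  at_ (replace w s v) (s %% size w + j) =
  if j < size v then nth (Box 0) v j else at_ w (s %% size w + j).
Proof.
move=> hv hj; have L0 : 0 < size w by lia.
rewrite /at_ size_replace /replace nth_mkseq ?ltn_pmod //=.
have hs := ltn_pmod s L0.
have E : ((s %% size w + j) %% size w + size w - s %% size w) %% size w = j.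
  have := modE (x := s %% size w + j) L0 ltac:(lia).
  have := ltn_pmod (s %% size w + j) L0.
  move: ((s %% size w + j) %% size w) => z h1 [] h2.
  + rewrite (_ : z + size w - s %% size w = j + size w); last lia.
    by rewrite modnDr modn_small.
  + rewrite (_ : z + size w - s %% size w = j); last lia.
    by rewrite modn_small.
by rewrite E.
Qed.

Lemma factor_g w s u j : factor w s u -> j < size u -> at_ w (s %% size w + j) = nth (Box 0) u j.
Proof.
case=> hu hf hj; rewrite -hf //; apply: at_cong; by rewrite modnDml.
Qed.

Lemma rot_u w s u : 0 < size w -> factor w s u ->
  rot (s %% size w) w = u ++ drop (size u) (rot (s %% size w) w).
Proof.
move=> L0 hf; have hu : size u <= size w by case: hf.
suff E : take (size u) (rot (s %% size w) w) = u by rewrite -{1}E cat_take_drop.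
apply: (@eq_from_nth _ (Box 0)); first by rewrite size_takel // size_rot.
move=> i; rewrite size_takel ?size_rot // => hi.
rewrite nth_take // nth_rot' ?ltn_pmod //; last lia.
exact: factor_g.
Qed.

Lemma rot_v w s (u v : seq letter) : 0 < size w -> size u <= size w -> size v = size u ->
  rot (s %% size w) (replace w s v) = v ++ drop (size u) (rot (s %% size w) w).
Proof.
move=> L0 hu hv.
apply: (@eq_from_nth _ (Box 0)).
  by rewrite size_rot size_replace size_cat size_drop size_rot; lia.
move=> i; rewrite size_rot size_replace => hi.
rewrite nth_rot' ?size_replace ?ltn_pmod // at_replace; last lia; last lia.
rewrite nth_cat hv; case: ifP => // h.
by rewrite nth_drop nth_rot' ?ltn_pmod //; [congr at_; congr addn|]; lia.
Qed.

Lemma shift_rep L s' y x : 0 < L -> s' < L -> y < L ->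
  (y + x) %% L = (s' + ((y + L - s') %% L + x)) %% L.
Proof.
move=> L0 hs hy.
have := modE (x := y + L - s') L0 ltac:(lia).
move: ((y + L - s') %% L) => Y [] e.
- by rewrite (_ : s' + (Y + x) = y + x + L) ?modnDr //; lia.
- by rewrite (_ : s' + (Y + x) = y + x) //; lia.
Qed.

Lemma bridge L n (I : pred nat) w s u v : 1 <= n <= L -> OmegaI L n I w -> factor w s u ->
  size v = size u ->
  (forall j, count (is_bul j) v = count (is_bul j) u) ->
  all (fun x => 1 <= letter_label x <= n) v ->
  (RP n I L (fun j => at_ w (s %% L + j)) -> RP n I L (fun j => at_ (replace w s v) (s %% L + j))) ->
  OmegaI L n I (replace w s v).
Proof.
move=> hn hw hf hv hcnt hall htr.
have L0 : 0 < L by lia.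
have RPw := omega_rp L0 hw.
have hP := OmegaPre hw.1.
have hs : size w = L by case: hP.
have hu : size u <= size w by case: hf.
have RPg : RP n I L (fun j => at_ w (s %% L + j)).
  move=> Y a t hY ht /= hg hint; rewrite addnA; apply: RPw; [by rewrite hs|exact: hg|].
  by move=> t' h; rewrite -addnA; apply: hint.
have RPg' := htr RPg.
subst L.
apply: rp_omega => //.
- case: hP => _ ha hc; split; first exact: size_replace.
  + rewrite -(all_rot' _ (s %% size w)) (rot_v _ L0 hu hv) all_cat hall /=.
    by rewrite -(all_rot' _ (s %% size w)) (rot_u L0 hf) all_cat in ha; case/andP: ha.
  + move=> k hk; rewrite -(count_rot _ (s %% size w)) (rot_v _ L0 hu hv) count_cat hcnt.
    by rewrite -count_cat -(rot_u L0 hf) count_rot hc.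
- move=> y a t ht hy hint.
  have hs' := ltn_pmod s L0.
  have key : forall x, at_ (replace w s v) (y + x) =
     at_ (replace w s v) (s %% size w + ((y %% size w + size w - s %% size w) %% size w + x)).
    move=> x; apply: at_cong; rewrite size_replace -modnDml.
    by apply: shift_rep => //; apply: ltn_pmod.
  rewrite key; apply: RPg'; [exact: ltn_pmod|by rewrite -(size_replace w s v)| |].
  + by move: (key 0); rewrite !addn0 => <-.
  + by move=> t' h; rewrite -key; apply: hint.
Qed.

Lemma nb_le (b c : bool) : (b -> c) -> (b <= c)%N.
Proof. by case: b; case: c => // /(_ isT). Qed.

Lemma W1p n i a m : 1 <= i <= n -> 1 <= a <= n -> i != nextl n a ->
  (wbox n i a).2 m <= (wbox n i (nextl n a)).2 m.
Proof.
move=> Hi Ha Hne; apply: nb_le; rewrite /nextl in Hne *.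
case: (a =P n) Hne => [Ea|Ea] Hne /=; case: ifP => h1; case: ifP => h2; lia.
Qed.

Lemma W2p n i a m : 1 <= i <= n -> 1 <= a <= n -> i != nextl n a -> m != nextl n a ->
  (wbox n i (nextl n a)).2 m <= (wbox n i a).2 m.
Proof.
move=> Hi Ha Hne Hm; apply: nb_le; rewrite /nextl in Hne Hm *.
case: (a =P n) Hne Hm => [Ea|Ea] Hne Hm /=; case: ifP => h1; case: ifP => h2; lia.
Qed.

Lemma W3p n k a m : 1 <= k <= n -> 1 <= a <= n -> k = nextl n a -> a != k -> 1 <= m <= n -> m != k ->
  (wbox n k a).2 m = 1.
Proof.
move=> Hi Ha Hk Hak Hm Hmk; rewrite /nextl in Hk; subst k.
case: (a =P n) Hak Hmk => [Ea|Ea] Hne Hm2 /=; case: ifP => h1; lia.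
Qed.

Lemma W0p n i m : (wbox n i i).2 m = 0.
Proof. rewrite /= leqnn /=. have -> : (i < m) && (m <= i) = false by lia. by rewrite andbF. Qed.

Lemma intr (g : nat -> letter) Y t t' j : (forall t', 0 < t' < t -> is_box (g (Y + t'))) ->
  0 < t' < t -> Y + t' = j -> is_box (g j).
Proof. by move=> H h <-; apply: H. Qed.

Lemma tr1 n I L g g' k i : 2 <= L -> (forall j, g (j + L) = g j) -> (forall j, g' (j + L) = g' j) ->
  (forall j, 1 <= letter_label (g j) <= n) ->
  g 0 = Bul k -> g 1 = Box i -> g' 0 = Box i -> g' 1 = Bul k ->
  (forall j, 2 <= j < L -> g' j = g j) -> i != k -> 1 <= i <= n ->
  RP n I L g -> RP n I L g'.
Proof.
move=> L2 Pg Pg' Lab g0 g1 g'0 g'1 Geq ik Hi HP Y a t HY Ht HgY Hint.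
have gL : g L = Bul k by rewrite -[L]add0n Pg.
have gL1 : g (L + 1) = Box i by rewrite addnC Pg.
have g'L : g' L = Box i by rewrite -[L]add0n Pg'.
have g'L1 : g' (L + 1) = Bul k by rewrite addnC Pg'.
have Qk : Q n I k (Box i) by rewrite -g1; apply: (HP 0) => //; [lia|lia|move=> t'; lia].
case: Y HY HgY Hint => [|[|Y]] HY HgY Hint.
- by rewrite g'0 in HgY.
- rewrite g'1 in HgY; case: HgY => <-.
  case: (ltngtP (1 + t) L) => Ht1.
  + have -> : g' (1 + t) = g (0 + t.+1) by rewrite Geq //; lia.
    apply: HP => //; [lia|lia|] => t' Ht'.
    case: t' Ht' => [|[|t']] Ht' //; first by rewrite g1.
    rewrite -Geq; last lia. by apply: (intr Hint (t' := t'.+1)); lia.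
  + rewrite (_ : 1 + t = L + 1); last lia. rewrite g'L1.
    have := HP 0 k L ltac:(lia) ltac:(lia) g0; rewrite add0n gL; apply.
    move=> t' Ht'; case: t' Ht' => [|[|t']] Ht' //; first by rewrite g1.
    rewrite -Geq; last lia. by apply: (intr Hint (t' := t'.+1)); lia.
  + by rewrite Ht1 g'L.
- have HgY' : g Y.+2 = Bul a by rewrite -Geq // ?HgY //; lia.
  case: (ltngtP (Y.+2 + t) L) => Ht1.
  + rewrite Geq; last lia. apply: HP; [lia|lia|exact HgY'|] => t' Ht'.
    rewrite -Geq; last lia. by apply: (intr Hint (t' := t')); lia.
  + case: (ltngtP (Y.+2 + t) (L + 1)) => Ht2.
    * lia.
    * have := intr Hint (t' := L + 1 - Y.+2) (j := L + 1); rewrite g'L1 => /(_ _ _)/=.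
      by move=> /(_ ltac:(lia) ltac:(lia)).
    * rewrite Ht2 g'L1.
      have := HP Y.+2 a t.-1 HY ltac:(lia) HgY'.
      rewrite (_ : Y.+2 + t.-1 = L); last lia. rewrite gL; apply.
      move=> t' Ht'; rewrite -Geq; last lia. by apply: (intr Hint (t' := t')); lia.
  + have Hn : k = nextl n a.
      have := HP Y.+2 a t HY Ht HgY'. rewrite Ht1 gL; apply.
      move=> t' Ht'; rewrite -Geq; last lia. by apply: (intr Hint (t' := t')); lia.
    rewrite Ht1 g'L /= => m Im.
    have Ha : 1 <= a <= n by have := Lab Y.+2; rewrite HgY'.
    have := W1p m Hi Ha (i := i); rewrite -Hn Qk // => /(_ ik); lia.
Qed.

Lemma lastbul n I L g k i : 2 <= L -> (forall j, g (j + L) = g j) ->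
  (forall j, 1 <= letter_label (g j) <= n) ->
  g 0 = Box i -> g 1 = Bul k -> RP n I L g ->
  exists a0, [/\ 1 <= a0 <= n, k = nextl n a0 & OKb n I i a0].
Proof.
move=> L2 Pg Lab g0 g1 HP.
have gL : g L = Box i by rewrite -[L]add0n Pg.
have gL1 : g (L + 1) = Bul k by rewrite addnC Pg.
pose P := fun j => (j < L) && ~~ is_box (g j).
have exP : exists j, P j by exists 1; rewrite /P g1 /= andbT.
have ubP : forall j, P j -> j <= L by move=> j /andP[/ltnW].
case: (ex_maxnP exP ubP) => Y0 /andP[HY0 HbY0] Hmax.
have Y01 : 1 <= Y0 by apply: (Hmax 1); rewrite /P g1 /= andbT.
case: (bul_of HbY0) => a0 Ha0.
have Hbox : forall j, Y0 < j < L -> is_box (g j).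
  move=> j Hj; apply/negPn/negP => Hb.
  have := Hmax j; rewrite /P Hb andbT; lia.
exists a0; split.
- by have := Lab Y0; rewrite Ha0.
- have := HP Y0 a0 (L + 1 - Y0) HY0 ltac:(lia) Ha0.
  rewrite (_ : Y0 + (L + 1 - Y0) = L + 1); last lia. rewrite gL1; apply.
  move=> t' Ht'; case: (ltngtP (Y0 + t') L) => E.
  + apply: Hbox; lia.
  + lia.
  + by rewrite E gL.
- have := HP Y0 a0 (L - Y0) HY0 ltac:(lia) Ha0.
  rewrite (_ : Y0 + (L - Y0) = L); last lia. rewrite gL; apply.
  move=> t' Ht'; apply: Hbox; lia.
Qed.

Lemma tr3 n I L g g' k i : 2 <= L -> (forall j, g (j + L) = g j) -> (forall j, g' (j + L) = g' j) ->
  (forall j, 1 <= letter_label (g j) <= n) ->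
  g 0 = Box i -> g 1 = Bul k -> g' 0 = Bul k -> g' 1 = Box i ->
  (forall j, 2 <= j < L -> g' j = g j) -> i != k -> 1 <= i <= n -> ~~ I k ->
  RP n I L g -> RP n I L g'.
Proof.
move=> L2 Pg Pg' Lab g0 g1 g'0 g'1 Geq ik Hi Ik HP Y a t HY Ht HgY Hint.
have gL : g L = Box i by rewrite -[L]add0n Pg.
have gL1 : g (L + 1) = Bul k by rewrite addnC Pg.
have g'L : g' L = Bul k by rewrite -[L]add0n Pg'.
have g'L1 : g' (L + 1) = Box i by rewrite addnC Pg'.
case: Y HY HgY Hint => [|[|Y]] HY HgY Hint.
- rewrite g'0 in HgY; case: HgY => <-.
  case: t Ht Hint => [|[|t]] Ht Hint; first lia.
  + rewrite addn1 g'1 /=.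
    have [a0 [Ha0 Hk Hok]] := lastbul L2 Pg Lab g0 g1 HP.
    move=> m Im; subst k.
    have Hm : m != nextl n a0 by apply: contraNneq Ik => <-.
    have := W2p Hi Ha0 ik Hm; rewrite (Hok m Im); lia.
  + case: (ltngtP (t.+2) L) => E.
    * rewrite add0n Geq; last lia.
      have := HP 1 k t.+1 ltac:(lia) ltac:(lia) g1. rewrite add1n; apply.
      move=> t' Ht'; rewrite -Geq; last lia. by apply: (intr Hint (t' := t'.+1)); lia.
    * lia.
    * rewrite add0n E g'L /=.
      have := HP 1 k L ltac:(lia) ltac:(lia) g1. rewrite addnC gL1; apply.
      move=> t' Ht'; case: (ltngtP (1 + t') L) => E2.
      -- rewrite -Geq; last lia. by apply: (intr Hint (t' := 1 + t')); lia.
      -- lia.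
      -- by rewrite E2 gL.
- by rewrite g'1 in HgY.
- have HgY' : g Y.+2 = Bul a by rewrite -Geq // ?HgY //; lia.
  case: (ltngtP (Y.+2 + t) L) => Ht1.
  + rewrite Geq; last lia. apply: HP; [lia|lia|exact HgY'|] => t' Ht'.
    rewrite -Geq; last lia. by apply: (intr Hint (t' := t')); lia.
  + have := intr Hint (t' := L - Y.+2) (j := L); rewrite g'L => /(_ _ _)/=.
    by move=> /(_ ltac:(lia) ltac:(lia)).
  + rewrite Ht1 g'L.
    have := HP Y.+2 a t.+1 HY ltac:(lia) HgY'.
    rewrite (_ : Y.+2 + t.+1 = L + 1); last lia. rewrite gL1; apply.
    move=> t' Ht'; case: (ltngtP (Y.+2 + t') L) => E2.
    -- rewrite -Geq; last lia. by apply: (intr Hint (t' := t')); lia.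
    -- lia.
    -- by rewrite E2 gL.
Qed.

Lemma tr2 n I L g g' c p k : c + 3 <= L -> (forall j, g (j + L) = g j) -> (forall j, g' (j + L) = g' j) ->
  g 0 = Bul p -> g' 0 = Bul p -> g (c + 1) = Bul k -> g (c + 2) = Box k ->
  g' 1 = Box p -> g' (c + 2) = Bul k ->
  (forall j, 1 <= j <= c -> g' j.+1 = g j) -> (forall j, 1 <= j <= c -> is_box (g j)) ->
  (forall j, c + 3 <= j < L -> g' j = g j) -> k = nextl n p ->
  RP n I L g -> RP n I L g'.
Proof.
move=> HL Pg Pg' g0 g'0 gc1 gc2 g'1 g'c2 Csh Cbox Geq Hk HP Y a t HY Ht HgY Hint.
have gL : g L = Bul p by rewrite -[L]add0n Pg.
have g'L : g' L = Bul p by rewrite -[L]add0n Pg'.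
have Geq' : forall j, c + 3 <= j <= L -> g' j = g j.
  move=> j Hj; case: (ltngtP j L) => E; [apply: Geq; lia|lia|by rewrite E gL g'L].
have Hout : forall Y0, c + 2 <= Y0 < L -> forall t0, 0 < t0 -> Y0 + t0 <= L ->
   (forall t', 0 < t' < t0 -> is_box (g' (Y0 + t'))) -> Y0 + t0 <= L.
  done.
case: (ltngtP Y (c + 2)) => EY.
- case: Y EY HY HgY Hint => [|Y] EY HY HgY Hint.
  + rewrite g'0 in HgY; case: HgY => <-.
    case: (ltngtP t (c + 2)) => Et.
    * case: t Et Ht Hint => [|[|t]] Et Ht Hint; first lia.
      -- by rewrite g'1 /= => m _; apply: W0p.
      -- rewrite add0n Csh; last lia.
         have := HP 0 p t.+1 ltac:(lia) ltac:(lia) g0; rewrite add0n; apply.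
         move=> t' Ht'; rewrite add0n; apply: Cbox; lia.
    * have := intr Hint (t' := c + 2) (j := c + 2); rewrite g'c2.
      by move=> /(_ ltac:(lia) ltac:(lia)).
    * by rewrite Et add0n g'c2.
  + exfalso; case: Y EY HY HgY Hint => [|Y] EY HY HgY Hint; first by rewrite g'1 in HgY.
    have := Cbox Y.+1 ltac:(lia); rewrite -Csh; last lia. by rewrite HgY.
- have HgY' : g Y = Bul a by rewrite -Geq // ?HgY //; lia.
  case: (leqP (Y + t) L) => Et.
  + rewrite Geq'; last lia. apply: HP; [lia|lia|exact HgY'|] => t' Ht'.
    rewrite -Geq; last lia. by apply: (intr Hint (t' := t')); lia.
  + have := intr Hint (t' := L - Y) (j := L); rewrite g'L.
    by move=> /(_ ltac:(lia) ltac:(lia)).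
- subst Y; rewrite g'c2 in HgY; case: HgY => <-.
  case: (leqP (c + 2 + t) L) => Et.
  + rewrite Geq'; last lia.
    have := HP (c + 1) k t.+1 ltac:(lia) ltac:(lia) gc1.
    rewrite (_ : c + 1 + t.+1 = c + 2 + t); last lia. apply.
    move=> t' Ht'; case: t' Ht' => [|[|t']] Ht'; first lia.
    * by rewrite (_ : c + 1 + 1 = c + 2) ?gc2 //; lia.
    * rewrite -Geq; last lia. by apply: (intr Hint (t' := t'.+1)); lia.
  + have := intr Hint (t' := L - (c + 2)) (j := L); rewrite g'L.
    by move=> /(_ ltac:(lia) ltac:(lia)).
Qed.

Lemma tr4 n (I : pred nat) L g g' c k q : c + 3 <= L -> (forall j, g (j + L) = g j) -> (forall j, g' (j + L) = g' j) ->
  (forall m, I m -> False) ->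
  g 0 = Box k -> g 1 = Bul k -> g (c + 2) = Bul q -> g' 0 = Bul k -> g' (c + 2) = Bul q ->
  (forall j, 1 <= j <= c + 1 -> is_box (g' j)) ->
  (forall j, c + 3 <= j < L -> g' j = g j) -> q = nextl n k ->
  RP n I L g -> RP n I L g'.
Proof.
move=> HL Pg Pg' noI g0 g1 gc2 g'0 g'c2 Cbox Geq Hq HP Y a t HY Ht HgY Hint.
have gL : g L = Box k by rewrite -[L]add0n Pg.
have gL1 : g (L + 1) = Bul k by rewrite addnC Pg.
have g'L : g' L = Bul k by rewrite -[L]add0n Pg'.
have Qb : forall a x, is_box x -> Q n I a x.
  by move=> a0 [//|i] _ m /noI.
case: (ltnP Y (c + 2)) => EY.
- case: Y EY HY HgY Hint => [|Y] EY HY HgY Hint.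
  + rewrite g'0 in HgY; case: HgY => <-.
    case: (ltngtP t (c + 2)) => Et.
    * apply: Qb; apply: Cbox; lia.
    * have := intr Hint (t' := c + 2) (j := c + 2); rewrite g'c2.
      by move=> /(_ ltac:(lia) ltac:(lia)).
    * by rewrite Et add0n g'c2.
  + by have := Cbox Y.+1 ltac:(lia); rewrite HgY.
- have HgY' : g Y = Bul a.
    case: (ltngtP Y (c + 2)) => E; [lia| |by rewrite E gc2 -g'c2 -E].
    by rewrite -Geq // ?HgY //; lia.
  case: (ltngtP (Y + t) L) => Et.
  + rewrite Geq; last lia. apply: HP; [lia|lia|exact HgY'|] => t' Ht'.
    rewrite -Geq; last lia. by apply: (intr Hint (t' := t')); lia.
  + have := intr Hint (t' := L - Y) (j := L); rewrite g'L.
    by move=> /(_ ltac:(lia) ltac:(lia)).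
  + rewrite Et g'L.
    have := HP Y a t.+1 HY ltac:(lia) HgY'.
    rewrite (_ : Y + t.+1 = L + 1); last lia. rewrite gL1; apply.
    move=> t' Ht'; case: (ltngtP (Y + t') L) => E2.
    -- rewrite -Geq; last lia. by apply: (intr Hint (t' := t')); lia.
    -- lia.
    -- by rewrite E2 gL.
Qed.

Lemma gper w x j : at_ w (x + (j + size w)) = at_ w (x + j).
Proof. by rewrite addnA at_per. Qed.
Lemma gper' w s v x j : at_ (replace w s v) (x + (j + size w)) = at_ (replace w s v) (x + j).
Proof. by rewrite -(size_replace w s v) addnA at_per. Qed.

Lemma nth_catr (s1 s2 : seq letter) j : nth (Box 0) (s1 ++ s2) (size s1 + j) = nth (Box 0) s2 j.
Proof. by rewrite nth_cat ltnNge leq_addr /= addKn. Qed.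
Lemma nth_cons_catr (x : letter) (s1 s2 : seq letter) j :
  nth (Box 0) (x :: s1 ++ s2) (size s1 + j).+1 = nth (Box 0) s2 j.
Proof. exact: nth_catr. Qed.
Lemma nth_cons2_catr (x y : letter) (s1 s2 : seq letter) j :
  nth (Box 0) (x :: y :: s1 ++ s2) (size s1 + j).+2 = nth (Box 0) s2 j.
Proof. exact: nth_catr. Qed.
Lemma nth_catl (s1 s2 : seq letter) j : j < size s1 -> nth (Box 0) (s1 ++ s2) j = nth (Box 0) s1 j.
Proof. by move=> h; rewrite nth_cat h. Qed.

Lemma atr_in w s v j : size v <= size w -> j < size v ->
  at_ (replace w s v) (s %% size w + j) = nth (Box 0) v j.
Proof. by move=> h1 h2; rewrite at_replace ?h2 //; lia. Qed.
Lemma atr_out w s v j : size v <= j < size w ->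
  at_ (replace w s v) (s %% size w + j) = at_ w (s %% size w + j).
Proof. by move=> h; rewrite at_replace; [rewrite ifF //|lia|lia]; lia. Qed.
Lemma all_u L n w s u : Pre L n w -> 0 < L -> factor w s u ->
  all (fun x => 1 <= letter_label x <= n) u.
Proof.
move=> hP L0 hf; apply/(all_nthP (Box 0)) => j hj.
rewrite -(factor_g hf hj); exact: at_lab hP L0.
Qed.

Lemma nextl_fix n k : 1 <= k <= n -> k = nextl n k -> n = 1.
Proof. rewrite /nextl; case: eqP; lia. Qed.

Theorem lemma5p4 (L n : nat) (I : pred nat) :
  1 <= n <= L ->
  (forall k, I k -> 1 <= k <= n) ->
  forall w w' : seq letter,
    OmegaI L n I w -> stepI n I w w' -> OmegaI L n I w'.
Proof.
move=> Hn HI w w' Hw [k [Hk Hst]].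
have L0 : 0 < L by lia.
have hP := OmegaPre Hw.1.
have hs : size w = L by case: hP.
subst L.
have Lab : forall j, 1 <= letter_label (at_ w j) <= n by move=> j; apply: (at_lab _ hP).
case: Hst => [[s [i [ik [hf ->]]]] | [ [s [C [hC [hf ->]]]] | [Ik [[s [i [ik [hf ->]]]] | [s [C [hC [hf ->]]]]]]]].
-
  have hu : 2 <= size w by case: hf.
  have hi : 1 <= i <= n by have := Lab (s %% size w + 1); rewrite (factor_g hf).
  apply: (bridge Hn Hw hf) => //.
  + by rewrite /= andbT; apply/andP.
  + move=> HP; apply: (tr1 (k := k) (i := i) _ _ _ _ _ _ _ _ _ ik hi HP) => //=.
    * by move=> j; rewrite gper.
    * by move=> j; rewrite gper'.
    * by rewrite (factor_g hf).
    * by rewrite (factor_g hf).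
    * by rewrite at_replace.
    * by rewrite at_replace.
    * move=> j hj; rewrite at_replace //; last lia.
      by rewrite ltnNge (_ : 2 <= j) //; lia.
-
  have hu : size C + 3 <= size w by case: hf; rewrite /= size_cat /= => h _; lia.
  have hau := all_u hP L0 hf.
  have hpk := prevl_range Hk.
  apply: (bridge Hn Hw hf).
  + by rewrite /= !size_cat /= !addnS.
  + by move=> j /=; rewrite !count_cat /= !addn0 ?add0n.
  + move: hau; rewrite /= !all_cat /= => /andP[_ /andP[-> _]]; by rewrite hpk Hk.
  + move=> HP; apply: (tr2 (c := size C) (p := prevl n k) (k := k) _ _ _ _ _ _ _ _ _ _ _ _ _ HP) => /=.
    * lia.
    * by move=> j; rewrite gper.
    * by move=> j; rewrite gper'.
    * by rewrite (factor_g hf).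
    * by rewrite atr_in //; rewrite /= size_cat /=; lia.
    * rewrite (factor_g hf); last by rewrite /= size_cat /=; lia.
      by rewrite addnS nth_cons_catr.
    * rewrite (factor_g hf); last by rewrite /= size_cat /=; lia.
      by rewrite addnS nth_cons_catr.
    * by rewrite atr_in //; rewrite /= size_cat /=; lia.
    * rewrite atr_in; last (by rewrite /= size_cat /=; lia); last by rewrite /= size_cat /=; lia.
      by rewrite 2!addnS nth_cons2_catr.
    * move=> j; case: j => [|j] hj; first lia.
      rewrite atr_in; last (by rewrite /= size_cat /=; lia); last by rewrite /= size_cat /=; lia.
      rewrite (factor_g hf); last by rewrite /= size_cat /=; lia.
      by rewrite /= !nth_catl //; lia.
    * move=> j; case: j => [|j] hj; first lia.
      rewrite (factor_g hf); last by rewrite /= size_cat /=; lia.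
      rewrite /= nth_catl; last lia.
      by move/(all_nthP (Box 0)): hC; apply; lia.
    * move=> j hj; rewrite atr_out //; rewrite /= size_cat /=; lia.
    * by rewrite next_prev.
-
  have hu : 2 <= size w by case: hf.
  have hi : 1 <= i <= n by have := Lab (s %% size w + 0); rewrite (factor_g hf).
  apply: (bridge Hn Hw hf) => //.
  + by rewrite /= andbT; apply/andP.
  + move=> HP; apply: (tr3 (k := k) (i := i) _ _ _ _ _ _ _ _ _ ik hi Ik HP) => //=.
    * by move=> j; rewrite gper.
    * by move=> j; rewrite gper'.
    * by rewrite (factor_g hf).
    * by rewrite (factor_g hf).
    * by rewrite at_replace.
    * by rewrite at_replace.
    * move=> j hj; rewrite at_replace //; last lia.
      by rewrite ltnNge (_ : 2 <= j) //; lia.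
-
  have hu : size C + 3 <= size w by case: hf; rewrite /= size_cat /= => h _; lia.
  have hau := all_u hP L0 hf.
  have hqk := nextl_range Hk.
  apply: (bridge Hn Hw hf).
  + by rewrite /= !size_cat /= !addnS.
  + by move=> j /=; rewrite !count_cat /= !addn0 ?add0n.
  + move: hau; rewrite /= !all_cat /= => /andP[_ /andP[_ /andP[-> _]]]; by rewrite hqk Hk.
  + move=> HP.
    have Pg : forall j, (fun j => at_ w (s %% size w + j)) (j + size w) =
                        (fun j => at_ w (s %% size w + j)) j by move=> j; rewrite /= gper.
    have g0 : (fun j => at_ w (s %% size w + j)) 0 = Box k by rewrite /= (factor_g hf).
    have g1 : (fun j => at_ w (s %% size w + j)) 1 = Bul k by rewrite /= (factor_g hf).
    have [a0 [Ha0 Hka Hok]] := lastbul (n := n) (I := I) (L := size w) ltac:(lia) Pg (fun j => Lab (s %% size w + j)) g0 g1 HP.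
    have noI : forall m, I m -> False.
      move=> m Im; have Hm := HI m Im.
      have Hmk : m != k by apply: contraNneq Ik => <-.
      case: (a0 =P k) => [Eak|Eak].
      * subst a0; have := nextl_fix Hk Hka; lia.
      * have := W3p Hk Ha0 Hka (introN eqP Eak) Hm Hmk; rewrite Hok //.
    apply: (tr4 (c := size C) (k := k) (q := nextl n k) _ Pg _ noI g0 g1 _ _ _ _ _ _ HP) => /=.
    * lia.
    * by move=> j; rewrite gper'.
    * rewrite (factor_g hf); last by rewrite /= size_cat /=; lia.
      by rewrite 2!addnS nth_cons2_catr.
    * by rewrite atr_in //; rewrite /= size_cat /=; lia.
    * rewrite atr_in; last (by rewrite /= size_cat /=; lia); last by rewrite /= size_cat /=; lia.
      by rewrite addnS nth_cons_catr.
    * move=> j; case: j => [|j] hj; first lia.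
      rewrite atr_in; last (by rewrite /= size_cat /=; lia); last by rewrite /= size_cat /=; lia.
      rewrite /= nth_cat; case: ifP => h.
      -- by move/(all_nthP (Box 0)): hC; apply.
      -- by rewrite (_ : j - size C = 0) //; lia.
    * move=> j hj; rewrite atr_out //; rewrite /= size_cat /=; lia.
    * by [].
Qed.
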